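(* Let $\mathcal{P}$ be a parametrised propositional logic program over a finite alphabet $\Sigma=\Sigma_p\cup\Sigma_d$. If the parametrised well-founded model of $\mathcal{P}$ is exact, i.e. of the form $(\mathcal{A},\mathcal{A})$ for some symbolic interpretation $\mathcal{A}\in L^d_p$, then for every $\Sigma$-interpretation $J$: $J\models_{wf}\mathcal{P}$ if and only if $J\models\mathrm{Th}(\mathcal{A})$.
   Context: A parametrised logic program is a finite set of rules $h\leftarrow l_1\wedge\dots\wedge l_n$ with $h\in\Sigma_d$ and each $l_i$ an atom of $\Sigma$ or its negation; $\varphi_q$ is the disjunction of bodies of rules with head $q$. $L_p$: equivalence classes of propositional formulas over $\Sigma_p$ ordered by entailment; $L^d_p$: maps $\Sigma_d\to L_p$ ordered pointwise. For $\mathcal{S}=(\mathcal{A}_t,\mathcal{A}_p)\in(L^d_p)^2$, $\varphi^{\mathcal{S}}$ is computed by substituting $(\overline q,\overline q)$ for $q\in\Sigma_p$ and $(\mathcal{A}_t(q),\mathcal{A}_p(q))$ for $q\in\Sigma_d$, with $\wedge,\vee$ componentwise and $(\neg\psi)^{\mathcal{S}}=(\overline{\neg\psi_p},\overline{\neg\psi_t})$. $\Psi_{\mathcal{P}}(\mathcal{S})(q)=\varphi_q^{\mathcal{S}}$ and $\mathcal{T}_{\mathcal{P}}(\mathcal{A})(q)=\varphi_q^{(\mathcal{A},\mathcal{A})}$ (common component). For an operator $B$ on $M^2$ (precision order $(x,y)\leq_p(u,v)$ iff $x\leq u,v\leq y$), a partial $B$-stable fixpoint is $(x,y)$ with $x=\mathrm{lfp}(B(\cdot,y)_1)$,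 $y=\mathrm{lfp}(B(x,\cdot)_2)$, and the $B$-well-founded fixpoint is the least precise one. The parametrised well-founded model of $\mathcal{P}$ is the $\Psi_{\mathcal{P}}$-well-founded fixpoint of $\mathcal{T}_{\mathcal{P}}$. $\mathrm{Th}(\mathcal{A})=\bigwedge_{q\in\Sigma_d}(q\leftrightarrow\psi_q)$ with $\psi_q$ a representative of $\mathcal{A}(q)$. For $I\in 2^{\Sigma_p}$, $T^I_{\mathcal{P}}$ is the immediate consequence operator on $2^{\Sigma_d}$ with $\Sigma_p$ fixed to $I$ and $\Psi^I_{\mathcal{P}}$ Fitting's three-valued operator on pairs of $\Sigma_d$-interpretations with $\Sigma_p$ fixed to $I$. $J\models_{wf}\mathcal{P}$ iff $(J\cap\Sigma_d,J\cap\Sigma_d)$ is the $\Psi^{J\cap\Sigma_p}_{\mathcal{P}}$-well-founded fixpoint of $T^{J\cap\Sigma_p}_{\mathcal{P}}$. *)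

(* Defs.v *)
From mathcomp Require Import all_boot.
Set Implicit Arguments. Unset Strict Implicit. Unset Printing Implicit Defensive.

(* ---------- Alphabet ----------
   Sigma = Sigma_p (+) Sigma_d, with P the finite type of parameter atoms and
   D the finite type of defined atoms; atoms of Sigma are P + D.
   A Sigma-interpretation is a set J : {set (P + D)%type}. *)

Inductive form (A : Type) : Type :=
  | FAtom of A
  | FTop | FBot
  | FNeg of form A
  | FAnd of form A & form A
  | FOr of form A & form A
  | FIff of form A & form A.
Arguments FTop {A}. Arguments FBot {A}.

Fixpoint fsat (A : Type) (v : A -> bool) (f : form A) : bool :=
  match f with
  | FAtom a => v a
  | FTop => true
  | FBot => false
  | FNeg g => ~~ fsat v g
  | FAnd g h => fsat v g && fsat v h
  | FOr g h => fsat v g || fsat v h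
  | FIff g h => fsat v g == fsat v h
  end.

Fixpoint fmap (A B : Type) (m : A -> B) (f : form A) : form B :=
  match f with
  | FAtom a => FAtom (m a)
  | FTop => FTop
  | FBot => FBot
  | FNeg g => FNeg (fmap m g)
  | FAnd g h => FAnd (fmap m g) (fmap m h)
  | FOr g h => FOr (fmap m g) (fmap m h)
  | FIff g h => FIff (fmap m g) (fmap m h)
  end.

(* ---------- Parametrised logic programs ----------
   A literal is (b, a): the atom a if b = true, its negation if b = false.
   A rule h <- l_1 /\ ... /\ l_n is (h, [:: l_1; ...; l_n]) with h in Sigma_d. *)
Definition lit (P D : Type) := (bool * (P + D))%type.
Definition rule (P D : Type) := (D * seq (lit P D))%type.
Definition program (P D : Type) := seq (rule P D).

(* ---------- L_p and L^d_p ----------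
   Since Sigma_p is finite, an element of L_p (a class of propositional
   formulas over Sigma_p modulo equivalence, ordered by entailment) is
   identified with its set of models, a set of Sigma_p-interpretations;
   entailment is inclusion. *)
Definition Lp (P : finType) := {set {set P}}.
Definition Ldp (P D : finType) := {ffun D -> Lp P}.

Definition Ldp_le (P D : finType) (A B : Ldp P D) : Prop :=
  forall q : D, A q \subset B q.

Definition fclass (P : finType) (psi : form P) : Lp P :=
  [set I : {set P} | fsat (fun p => p \in I) psi].

Section AFT.
Variables (M : Type) (le : M -> M -> Prop).

Definition is_lfp (f : M -> M) (x : M) : Prop :=
  f x = x /\ forall y, f y = y -> le x y.

Definition prec_le (S S' : M * M) : Prop := le S.1 S'.1 /\ le S'.2 S.2.

Definition partial_stable (B : M * M -> M * M) (S : M * M) : Prop :=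
  is_lfp (fun u => (B (u, S.2)).1) S.1 /\ is_lfp (fun v => (B (S.1, v)).2) S.2.

Definition is_wf_fixpoint (B : M * M -> M * M) (S : M * M) : Prop :=
  partial_stable B S /\ forall S', partial_stable B S' -> prec_le S S'.
End AFT.

Section Symbolic.
Variables (P D : finType).

Definition lit_sym (S : Ldp P D * Ldp P D) (l : lit P D) : Lp P * Lp P :=
  match l with
  | (true, inl p) => ([set I : {set P} | p \in I], [set I : {set P} | p \in I])
  | (false, inl p) => (~: [set I : {set P} | p \in I], ~: [set I : {set P} | p \in I])
  | (true, inr q) => (S.1 q, S.2 q)
  | (false, inr q) => (~: S.2 q, ~: S.1 q)
  end.

Definition phi_sym (prog : program P D) (q : D) (S : Ldp P D * Ldp P D)
    : Lp P * Lp P :=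
  (\bigcup_(r <- prog | r.1 == q) \bigcap_(l <- r.2) (lit_sym S l).1,
   \bigcup_(r <- prog | r.1 == q) \bigcap_(l <- r.2) (lit_sym S l).2).

Definition Psi_P (prog : program P D) (S : Ldp P D * Ldp P D)
    : Ldp P D * Ldp P D :=
  ([ffun q => (phi_sym prog q S).1], [ffun q => (phi_sym prog q S).2]).

Definition T_P (prog : program P D) (A : Ldp P D) : Ldp P D :=
  [ffun q => (phi_sym prog q (A, A)).1].

Definition param_wf_model (prog : program P D) (S : Ldp P D * Ldp P D) : Prop :=
  is_wf_fixpoint (@Ldp_le P D) (Psi_P prog) S.

(* Th(A) for a choice of representatives psi_q of A(q) *)
Definition Th (psi : D -> form P) : form (P + D)%type :=
  \big[@FAnd _/FTop]_(q : D) FIff (FAtom (inr q)) (fmap inl (psi q)).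
End Symbolic.

Section Concrete.
Variables (P D : finType).

Definition lit_conc (I : {set P}) (S : {set D} * {set D}) (l : lit P D)
    : bool * bool :=
  match l with
  | (true, inl p) => (p \in I, p \in I)
  | (false, inl p) => (p \notin I, p \notin I)
  | (true, inr q) => (q \in S.1, q \in S.2)
  | (false, inr q) => (q \notin S.2, q \notin S.1)
  end.

Definition phi_conc (prog : program P D) (I : {set P}) (q : D)
    (S : {set D} * {set D}) : bool * bool :=
  (has (fun r : rule P D => (r.1 == q) && all (fun l => (lit_conc I S l).1) r.2) prog,
   has (fun r : rule P D => (r.1 == q) && all (fun l => (lit_conc I S l).2) r.2) prog).

Definition Psi_I (prog : program P D) (I : {set P}) (S : {set D} * {set D})
    : {set D} * {set D} :=
  ([set q | (phi_conc prog I q S).1], [set q | (phi_conc prog I q S).2]).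

Definition T_I (prog : program P D) (I : {set P}) (x : {set D}) : {set D} :=
  [set q | (phi_conc prog I q (x, x)).1].

Definition restr_p (J : {set (P + D)%type}) : {set P} := [set p | inl p \in J].
Definition restr_d (J : {set (P + D)%type}) : {set D} := [set q | inr q \in J].

Definition wf_models (prog : program P D) (J : {set (P + D)%type}) : Prop :=
  is_wf_fixpoint (fun x y : {set D} => x \subset y)
    (Psi_I prog (restr_p J)) (restr_d J, restr_d J).
End Concrete.

(* Main.v *)
Require Import Defs.
From mathcomp Require Import all_boot.
Set Implicit Arguments. Unset Strict Implicit. Unset Printing Implicit Defensive.

Section Proofs.
Variables (P D : finType).

Definition ev (I : {set P}) (X : Ldp P D) : {set D} := [set q | I \in X q].

Lemma ev_ext (X Y : Ldp P D) : (forall I, ev I X = ev I Y) -> X = Y.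
Proof.
move=> H; apply/ffunP => q; apply/setP => I.
by have /setP/(_ q) := H I; rewrite !inE.
Qed.

Lemma ev_le (X Y : Ldp P D) : (forall I, ev I X \subset ev I Y) -> Ldp_le X Y.
Proof.
move=> H q; apply/subsetP => I HI.
by have /subsetP/(_ q) := H I; rewrite !inE; apply.
Qed.

Lemma le_ev (X Y : Ldp P D) I : Ldp_le X Y -> ev I X \subset ev I Y.
Proof.
move=> H; apply/subsetP => q; rewrite !inE => HI.
exact: (subsetP (H q)).
Qed.

Definition upd (X : Ldp P D) (I0 : {set P}) (u : {set D}) : Ldp P D :=
  [ffun q => [set I | if I == I0 then q \in u else I \in X q]].

Lemma ev_upd X I0 u I : ev I (upd X I0 u) = if I == I0 then u else ev I X.
Proof.
apply/setP => q; rewrite !inE ffunE inE.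
by case: (I == I0); rewrite ?inE.
Qed.

Lemma in_bigcup_seq (T : finType) (R : Type) (s : seq R) (pr : pred R) (F : R -> {set T}) x :
  (x \in \bigcup_(r <- s | pr r) F r) = has (fun r => pr r && (x \in F r)) s.
Proof.
elim: s => [|r s IH]; first by rewrite big_nil inE.
rewrite big_cons /=; case: (pr r) => //=; by rewrite inE IH.
Qed.

Lemma in_bigcap_seq (T : finType) (R : Type) (s : seq R) (F : R -> {set T}) x :
  (x \in \bigcap_(r <- s) F r) = all (fun r => x \in F r) s.
Proof.
elim: s => [|r s IH]; first by rewrite big_nil inE.
by rewrite big_cons /= inE IH.
Qed.

Lemma lit_comm (S : Ldp P D * Ldp P D) I l :
  ((I \in (lit_sym S l).1) = (lit_conc I (ev I S.1, ev I S.2) l).1) /\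
  ((I \in (lit_sym S l).2) = (lit_conc I (ev I S.1, ev I S.2) l).2).
Proof.
by case: l => [[] [p|q]] /=; rewrite !inE.
Qed.

Lemma Psi_comm prog S I :
  ev I (Psi_P prog S).1 = (Psi_I prog I (ev I S.1, ev I S.2)).1 /\
  ev I (Psi_P prog S).2 = (Psi_I prog I (ev I S.1, ev I S.2)).2.
Proof.
split; apply/setP => q; rewrite !inE ffunE /= in_bigcup_seq;
  apply: eq_has => r; rewrite in_bigcap_seq; congr andb; apply: eq_all => l;
  by case: (lit_comm S I l).
Qed.

Lemma lfp_pointwise (f : Ldp P D -> Ldp P D) (g : {set P} -> {set D} -> {set D})
  (Hfg : forall X I, ev I (f X) = g I (ev I X)) X :
  is_lfp (@Ldp_le P D) f X <->
  forall I, is_lfp (fun x y : {set D} => x \subset y) (g I) (ev I X).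
Proof.
split.
- move=> [fX Hmin] I; split; first by rewrite -Hfg fX.
  move=> y gy.
  have : f (upd X I y) = upd X I y.
    apply: ev_ext => I'; rewrite Hfg !ev_upd.
    case: eqP => [->//|_]; by rewrite -Hfg fX.
  move/Hmin/(le_ev I); by rewrite ev_upd eqxx.
- move=> H; split.
    apply: ev_ext => I; rewrite Hfg; exact: (H I).1.
  move=> Y fY; apply: ev_le => I; apply: (H I).2.
  by rewrite -Hfg fY.
Qed.

Lemma stable_pointwise prog S :
  partial_stable (@Ldp_le P D) (Psi_P prog) S <->
  forall I, partial_stable (fun x y : {set D} => x \subset y) (Psi_I prog I) (ev I S.1, ev I S.2).
Proof.
rewrite /partial_stable.
have E1 := lfp_pointwise (f := fun u => (Psi_P prog (u, S.2)).1)
  (g := fun I u => (Psi_I prog I (u, ev I S.2)).1)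
  (fun X I => (Psi_comm prog (X, S.2) I).1) S.1.
have E2 := lfp_pointwise (f := fun v => (Psi_P prog (S.1, v)).2)
  (g := fun I v => (Psi_I prog I (ev I S.1, v)).2)
  (fun X I => (Psi_comm prog (S.1, X) I).2) S.2.
split.
  by move=> [/E1 H1 /E2 H2] I; split; [exact: H1|exact: H2].
by move=> H; split; [apply/E1|apply/E2] => I; case: (H I).
Qed.

End Proofs.

Lemma eq_fsat (A : Type) (v w : A -> bool) (f : form A) : v =1 w -> fsat v f = fsat w f.
Proof. move=> E; elim: f => /=; try congruence. Qed.

Lemma fsat_fmap (A B : Type) (m : A -> B) (v : B -> bool) (f : form A) :
  fsat v (fmap m f) = fsat (fun a => v (m a)) f.
Proof. elim: f => /=; congruence. Qed.

Theorem theorem4p11 (P D : finType) (prog : program P D) (A : Ldp P D)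
  (psi : D -> form P) :
  param_wf_model prog (A, A) ->
  (forall q : D, fclass (psi q) = A q) ->
  forall J : {set (P + D)%type},
    wf_models prog J <-> fsat (fun a => a \in J) (Th psi).
Proof.
move=> [Hst Hmin] Hpsi J.
set I0 := restr_p J.
have Hwf : is_wf_fixpoint (fun x y : {set D} => x \subset y) (Psi_I prog I0)
             (ev I0 A, ev I0 A).
  split; first exact: (proj1 (stable_pointwise prog (A, A)) Hst I0).
  move=> [u v] Huv.
  have : partial_stable (@Ldp_le P D) (Psi_P prog) (upd A I0 u, upd A I0 v).
    apply/stable_pointwise => I /=; rewrite !ev_upd.
    case: eqP => [->//|_].
    exact: (proj1 (stable_pointwise prog (A, A)) Hst I).
  move/Hmin => [/(le_ev I0) H1 /(le_ev I0) H2].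
  by rewrite !ev_upd eqxx in H1 H2; split.
have Heq : wf_models prog J <-> restr_d J = ev I0 A.
  split; last by rewrite /wf_models => ->.
  move=> [Hs _]; have [H1 H2] := Hwf.2 _ Hs.
  by apply/eqP; rewrite eqEsubset H1 H2.
have Hth : fsat (fun a => a \in J) (Th psi) = [forall q, (inr q \in J) == (I0 \in A q)].
  rewrite /Th (big_morph (fsat (fun a => a \in J)) (id1 := true) (op1 := andb)) //.
  rewrite big_andE; apply: eq_forallb => q /=.
  rewrite fsat_fmap -Hpsi inE; congr eq_op; apply: eq_fsat => p.
  by rewrite /I0 /restr_p inE.
rewrite Hth; split.
- move/Heq => E; apply/forallP => q; by rewrite -[_ \in J](in_set (fun q => inr q \in J)) -/(restr_d J) E inE.
- move/forallP => H; apply/Heq; apply/setP => q; rewrite !inE; exact/eqP/H.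
Qed.
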